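(* Consider any sequences evolved by Algorithm 1 and let $d_0:=\|x^*-x^0\|$. Then: (a) for all $k\ge1$, $h(y^k)-h(x^* )\le\frac{d_0^2}{2A_k}$, $\|x^*-y^k\|^2\le\frac{d_0^2}{\mu A_k}$, and $\|x^*-x^k\|^2\le\frac{d_0^2}{1+\mu A_k}$; (b) for all $k\ge1$, $v^{k+1}\in\partial_{\varepsilon_{k+1}}f(y^{k+1})+\partial g(y^{k+1})$, $\|v^{k+1}\|^2\le\frac{6\big(1+\sigma\sqrt{1+\mu\lambda_{k+1}}\big)^2}{\lambda_{k+1}^2}\cdot\frac{d_0^2}{\mu A_k}$, and $\varepsilon_{k+1}\le\frac{3\sigma^2}{\lambda_{k+1}}\cdot\frac{d_0^2}{\mu A_k}$.
   Context: Setting: $\mathcal H$ is a finite-dimensional real inner product space with inner product $\langle\cdot,\cdot\rangle$ and norm $\|\cdot\|$. $f,g:\mathcal H\to(-\infty,\infty]$ are proper, closed, convex functions, $h:=f+g$ has nonempty domain, and $g$ is $\mu$-strongly convex for some $\mu>0$, i.e. $g(tx+(1-t)y)\le tg(x)+(1-t)g(y)-\frac{\mu}{2}t(1-t)\|x-y\|^2$ for all $x,y\in\mathcal H$, $t\in[0,1]$. $x^*$ denotes the unique minimizer of $h$. For $\varepsilon\ge 0$, $\partial_\varepsilon f(y):=\{u\in\mathcal H: f(w)\ge f(y)+\langle u,w-y\rangle-\varepsilon\ \forall w\in\mathcal H\}$, and $\partial g:=\partial_0 g$. Algorithm 1: Choose $x^0,y^0\in\mathcal H$ and $\sigma\in[0,1]$,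 and set $A_0=0$. For $k=0,1,2,\dots$: choose $\lambda_{k+1}>0$, set $a_{k+1}=\frac{(1+2\mu A_k)\lambda_{k+1}+\sqrt{(1+2\mu A_k)^2\lambda_{k+1}^2+4(1+\mu A_k)A_k\lambda_{k+1}}}{2}$ and $\tilde x^k=\frac{a_{k+1}-\mu A_k\lambda_{k+1}}{A_k+a_{k+1}}x^k+\frac{A_k+\mu A_k\lambda_{k+1}}{A_k+a_{k+1}}y^k$; compute $(y^{k+1},v^{k+1},\varepsilon_{k+1})\in\mathcal H\times\mathcal H\times[0,\infty)$ such that $v^{k+1}\in\partial_{\varepsilon_{k+1}}f(y^{k+1})+\partial g(y^{k+1})$ and $\frac{\|\lambda_{k+1}v^{k+1}+y^{k+1}-\tilde x^k\|^2}{1+\lambda_{k+1}\mu}+2\lambda_{k+1}\varepsilon_{k+1}\le\sigma^2\|y^{k+1}-\tilde x^k\|^2$; then set $A_{k+1}=A_k+a_{k+1}$ and $x^{k+1}=\frac{1+\mu A_k}{1+\mu A_{k+1}}x^k+\frac{\mu a_{k+1}}{1+\mu A_{k+1}}y^{k+1}-\frac{a_{k+1}}{1+\mu A_{k+1}}v^{k+1}$. ''Sequences evolved by Algorithm 1'' means any sequences satisfying all these relations for every $k\ge 0$. *)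

(* Defs.v *)
From HB Require Import structures.
From mathcomp Require Import all_boot all_order all_algebra.
From mathcomp Require Import all_classical all_reals all_analysis.
Set Implicit Arguments. Unset Strict Implicit. Unset Printing Implicit Defensive.
Import Order.TTheory GRing.Theory Num.Theory.
Import numFieldNormedType.Exports.
Local Open Scope ring_scope.
Local Open Scope classical_set_scope.

(* The finite-dimensional real inner product space H is modelled as
   'rV[R]_n with the standard (Euclidean) inner product. *)
Definition ip {R : realType} {n : nat} (u v : 'rV[R]_n) : R :=
  \sum_(i < n) u ord0 i * v ord0 i.

Definition enorm {R : realType} {n : nat} (u : 'rV[R]_n) : R := Num.sqrt (ip u u).

Definition proper_fun {R : realType} {n : nat} (f : 'rV[R]_n -> \bar R) : Prop :=
  (forall x, f x <> -oo%E) /\ (exists x, (f x < +oo)%E).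

Definition closed_fun {R : realType} {n : nat} (f : 'rV[R]_n -> \bar R) : Prop :=
  forall c : R, closed [set x | (f x <= c%:E)%E].

Definition strongly_convex {R : realType} {n : nat} (mu : R)
  (f : 'rV[R]_n -> \bar R) : Prop :=
  forall (x y : 'rV[R]_n) (t : R), 0 <= t -> t <= 1 ->
    (f (t *: x + (1 - t) *: y)%R <=
      t%:E * f x + (1 - t)%:E * f y
      - (mu / 2 * t * (1 - t) * enorm (x - y) ^+ 2)%:E)%E.

Definition convex_fun {R : realType} {n : nat} (f : 'rV[R]_n -> \bar R) : Prop :=
  strongly_convex 0 f.

Definition eps_subdiff {R : realType} {n : nat} (f : 'rV[R]_n -> \bar R)
  (eps : R) (y u : 'rV[R]_n) : Prop :=
  forall w, (f w >= f y + (ip u (w - y)%R)%:E - eps%:E)%E.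

Definition in_sum_subdiff {R : realType} {n : nat} (f g : 'rV[R]_n -> \bar R)
  (eps : R) (y v : 'rV[R]_n) : Prop :=
  exists u w, eps_subdiff f eps y u /\ eps_subdiff g 0 y w /\ v = u + w.

Definition algorithm1 {R : realType} {n : nat} (f g : 'rV[R]_n -> \bar R) (mu sigma : R)
  (x y xt v : nat -> 'rV[R]_n) (eps lam a A : nat -> R) : Prop :=
  0 <= sigma <= 1 /\ A 0%N = 0 /\
  forall k : nat,
    [/\ 0 < lam k.+1 /\
        a k.+1 = ((1 + 2 * mu * A k) * lam k.+1
                  + Num.sqrt ((1 + 2 * mu * A k) ^+ 2 * lam k.+1 ^+ 2
                              + 4 * (1 + mu * A k) * A k * lam k.+1)) / 2,
        xt k = ((a k.+1 - mu * A k * lam k.+1) / (A k + a k.+1)) *: x k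
               + ((A k + mu * A k * lam k.+1) / (A k + a k.+1)) *: y k,
        [/\ in_sum_subdiff f g (eps k.+1) (y k.+1) (v k.+1),
            0 <= eps k.+1 &
            enorm (lam k.+1 *: v k.+1 + y k.+1 - xt k) ^+ 2 / (1 + lam k.+1 * mu)
              + 2 * lam k.+1 * eps k.+1
              <= sigma ^+ 2 * enorm (y k.+1 - xt k) ^+ 2],
        A k.+1 = A k + a k.+1 &
        x k.+1 = ((1 + mu * A k) / (1 + mu * A k.+1)) *: x k
                 + ((mu * a k.+1) / (1 + mu * A k.+1)) *: y k.+1
                 - (a k.+1 / (1 + mu * A k.+1)) *: v k.+1].

(* Main.v *)
Require Import Defs.
From HB Require Import structures.
From mathcomp Require Import all_boot all_order all_algebra.
From mathcomp Require Import all_classical all_reals all_analysis.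
From mathcomp Require Import ring lra.
Import Order.TTheory GRing.Theory Num.Theory.
Local Open Scope ring_scope.

Ltac coord := rewrite /ip; do ?[rewrite -!sumrN | rewrite -!big_split | rewrite !mulr_sumr | rewrite !mulr_suml];
  apply: eq_bigr => i _; rewrite ?mxE /=.


Lemma ip_sym (R : realType) n (p q : 'rV[R]_n) : ip p q = ip q p.
Proof. coord; ring. Qed.

Lemma ipDl (R : realType) n (p q r : 'rV[R]_n) : ip (p + q) r = ip p r + ip q r.
Proof. coord; ring. Qed.

Lemma nsq_ge0 (R : realType) n (p : 'rV[R]_n) : 0 <= ip p p.
Proof. rewrite /ip; apply: sumr_ge0 => i _; rewrite -expr2; exact: sqr_ge0. Qed.

Lemma enorm_sq (R : realType) n (p : 'rV[R]_n) : enorm p ^+ 2 = ip p p.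
Proof. by rewrite /enorm sqr_sqrtr // nsq_ge0. Qed.

Lemma nsq_lin (R : realType) n (p q : 'rV[R]_n) (s t : R) :
  ip (s *: p - t *: q) (s *: p - t *: q) = s ^+ 2 * ip p p - 2 * s * t * ip p q + t ^+ 2 * ip q q.
Proof. coord; ring. Qed.

Lemma nsqN (R : realType) n (p q : 'rV[R]_n) : ip (p - q) (p - q) = ip (q - p) (q - p).
Proof. coord; ring. Qed.

Lemma nsqZ (R : realType) n (p : 'rV[R]_n) (s : R) : ip (s *: p) (s *: p) = s ^+ 2 * ip p p.
Proof. coord; ring. Qed.

Lemma nsq_conv (R : realType) n (p q : 'rV[R]_n) (s t : R) :
  0 <= s -> 0 <= t -> s + t = 1 ->
  ip (s *: p + t *: q) (s *: p + t *: q) <= s * ip p p + t * ip q q.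
Proof.
move=> hs ht hst.
have -> : s * ip p p + t * ip q q = ip (s *: p + t *: q) (s *: p + t *: q) + s * t * ip (p - q) (p - q).
  have -> : t = 1 - s by lra.
  coord; ring.
rewrite lerDl; apply: mulr_ge0; [exact: mulr_ge0 | exact: nsq_ge0].
Qed.

Lemma nsq_add2 (R : realType) n (p q : 'rV[R]_n) :
  ip (p + q) (p + q) <= 2 * ip p p + 2 * ip q q.
Proof.
have -> : 2 * ip p p + 2 * ip q q = ip (p + q) (p + q) + ip (p - q) (p - q) by coord; ring.
by rewrite lerDl nsq_ge0.
Qed.

Lemma cs (R : realType) n (p q : 'rV[R]_n) : ip p q ^+ 2 <= ip p p * ip q q.
Proof.
have [hq|hq] := eqVneq (ip q q) 0.
  have hz : forall i, q ord0 i = 0.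
    move=> i; move/eqP: hq; rewrite /ip psumr_eq0; last first.
      by move=> j _; rewrite -expr2 sqr_ge0.
    move/allP => /(_ i (mem_index_enum _)) /=; rewrite -expr2 sqrf_eq0.
    by move/eqP.
  have -> : ip p q = 0 by rewrite /ip big1 // => i _; rewrite hz mulr0.
  by rewrite hq expr0n /= mulr0.
have hq0 : 0 < ip q q by rewrite lt_def hq nsq_ge0.
have := @nsq_ge0 R n (ip q q *: p - ip p q *: q).
rewrite nsq_lin => h.
have : 0 <= ip q q * (ip p p * ip q q - ip p q ^+ 2) by nra.
rewrite pmulr_rge0 //; lra.
Qed.

Lemma tlemma (R : realType) (D M : R) : 0 <= M ->
  (forall t, 0 < t -> t <= 1 -> - (t * M) <= D) -> 0 <= D.
Proof.
move=> hM H; rewrite leNgt; apply/negP => hD.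
have hMD : 0 < M - D by lra.
set t := - D / (M - D).
have ht0 : 0 < t by rewrite /t divr_gt0 //; lra.
have ht1 : t <= 1 by rewrite /t ler_pdivrMr //; lra.
have htt : t * (M - D) = - D by rewrite /t mulfVK // gt_eqF.
have := H t ht0 ht1.
nra.
Qed.

Lemma le_fin_fin (R : realType) (e : \bar R) (r : R) : e <> -oo%E -> (e <= r%:E)%E -> e = (fine e)%:E.
Proof. by case: e. Qed.

Lemma subdiff_fin (R : realType) n (f : 'rV[R]_n -> \bar R) e y u :
  (forall x, f x <> -oo%E) -> (exists z, (f z < +oo)%E) -> eps_subdiff f e y u ->
  f y = (fine (f y))%:E.
Proof.
move=> hn [z hz] hs; have := hs z; have := hn y; case: (f y) => // _ /=.
move: hz; case: (f z) => //= r _.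
Qed.

Lemma g_strong (R : realType) n (g : 'rV[R]_n -> \bar R) (mu : R) y w u (gy gu : R) :
  0 < mu -> strongly_convex mu g -> eps_subdiff g 0 y w -> g y = gy%:E -> g u = gu%:E ->
  gy + ip w (u - y) + mu / 2 * ip (u - y) (u - y) <= gu.
Proof.
move=> hmu hsc hsd hy hu.
set M := mu / 2 * ip (u - y) (u - y).
have hM : 0 <= M by apply: mulr_ge0; [lra | exact: nsq_ge0].
suff: 0 <= gu - gy - ip w (u - y) - M by lra.
apply: (@tlemma R _ M hM) => t ht0 ht1.
have h1 := hsc u y t (ltW ht0) ht1; rewrite hu hy enorm_sq in h1.
have h2 := hsd (t *: u + (1 - t) *: y); rewrite hy in h2.
have h3 := le_trans h2 h1.
have : gy + ip w (t *: u + (1 - t) *: y - y) - 0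
        <= t * gu + (1 - t) * gy - mu / 2 * t * (1 - t) * ip (u - y) (u - y).
  by move: h3; rewrite -?EFinM -?EFinD -?EFinB -?EFinD -?EFinB lee_fin.
have -> : ip w (t *: u + (1 - t) *: y - y) = t * ip w (u - y) by coord; ring.
move=> h.
have : 0 <= t * (gu - gy - ip w (u - y) - M + t * M) by rewrite /M; lra.
rewrite pmulr_rge0 //; lra.
Qed.

Lemma gamma (R : realType) n (f g : 'rV[R]_n -> \bar R) (mu eps : R) y v u (fy gy fu gu : R) :
  0 < mu -> strongly_convex mu g -> in_sum_subdiff f g eps y v ->
  f y = fy%:E -> g y = gy%:E -> f u = fu%:E -> g u = gu%:E ->
  fy + gy + ip v (u - y) + mu / 2 * ip (u - y) (u - y) - eps <= fu + gu.
Proof.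
move=> hmu hsc [uf [w [hf [hg ->]]]] hfy hgy hfu hgu.
have h1 := @g_strong R n g mu y w u gy gu hmu hsc hg hgy hgu.
have := hf u; rewrite hfy hfu -?EFinD -?EFinB lee_fin => h2.
rewrite ipDl; lra.
Qed.

Lemma hmin_lemma (R : realType) n (f g : 'rV[R]_n -> \bar R) (mu : R) ys xs (fy gy fs gs : R) :
  0 < mu -> convex_fun f -> strongly_convex mu g ->
  (forall z, f z <> -oo%E) -> (forall z, g z <> -oo%E) ->
  (forall z, (f xs + g xs <= f z + g z)%E) ->
  f ys = fy%:E -> g ys = gy%:E -> f xs = fs%:E -> g xs = gs%:E ->
  fs + gs + mu / 2 * ip (ys - xs) (ys - xs) <= fy + gy.
Proof.
move=> hmu hcf hsc hfn hgn hmin hfy hgy hfs hgs.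
set M := mu / 2 * ip (ys - xs) (ys - xs).
have hM : 0 <= M by apply: mulr_ge0; [lra | exact: nsq_ge0].
suff: 0 <= fy + gy - fs - gs - M by lra.
apply: (@tlemma R _ M hM) => t ht0 ht1.
set p := t *: ys + (1 - t) *: xs.
have h1 := hcf ys xs t (ltW ht0) ht1; rewrite hfy hfs enorm_sq -/p in h1.
have h2 := hsc ys xs t (ltW ht0) ht1; rewrite hgy hgs enorm_sq -/p in h2.
move: h1; rewrite -?EFinM -?EFinD -?EFinB -?EFinD -?EFinB => h1.
move: h2; rewrite -?EFinM -?EFinD -?EFinB -?EFinD -?EFinB => h2.
have hfp := @le_fin_fin R _ _ (hfn p) h1.
have hgp := @le_fin_fin R _ _ (hgn p) h2.
rewrite hfp lee_fin in h1; rewrite hgp lee_fin in h2.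
have := hmin p; rewrite hfs hgs hfp hgp -!EFinD lee_fin => h3.
have : 0 <= t * (fy + gy - fs - gs - M + t * M) by rewrite /M; lra.
rewrite pmulr_rge0 //; lra.
Qed.

Lemma step_id (R : realType) n (x y y' v w xt x' : 'rV[R]_n) (A a mu lam : R) :
  0 <= A -> 0 < a -> 0 < mu ->
  lam = a ^+ 2 / (a * (1 + 2 * mu * A) + (1 + mu * A) * A) ->
  xt = ((a - mu * A * lam) / (A + a)) *: x + ((A + mu * A * lam) / (A + a)) *: y ->
  x' = ((1 + mu * A) / (1 + mu * (A + a))) *: x + ((mu * a) / (1 + mu * (A + a))) *: y'
              - (a / (1 + mu * (A + a))) *: v ->
  (1 + mu * A) / 2 * ip (w - x) (w - x) - (1 + mu * (A + a)) / 2 * ip (w - x') (w - x')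
  + ip v (a *: (w - y') + A *: (y - y')) + mu / 2 * (a * ip (w - y') (w - y') + A * ip (y - y') (y - y'))
  = (A + a) / (1 + lam * mu) / (2 * lam) *
      ((1 + lam * mu) * ip (y' - xt) (y' - xt) - ip (lam *: v + y' - xt) (lam *: v + y' - xt))
    + (A + a) / (1 + lam * mu) * mu / 2 * ((a - mu * A * lam) / (A + a)) * ((A + mu * A * lam) / (A + a))
      * ip (x - y) (x - y).
Proof.
move=> hA ha hmu hl hxt hx'.
have hD : 0 < a * (1 + 2 * mu * A) + (1 + mu * A) * A.
  have hmA : 0 <= mu * A by apply: mulr_ge0; lra.
  have h1 : 0 <= (1 + mu * A) * A by apply: mulr_ge0; lra.
  have h2 : 0 < a * (1 + 2 * mu * A) by apply: mulr_gt0 => //; rewrite -mulrA; lra.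
  lra.
have hAa : A + a != 0 by rewrite gt_eqF //; lra.
have hc : 1 + mu * (A + a) != 0.
  have : 0 < mu * (A + a) by apply: mulr_gt0; lra.
  move=> h; rewrite gt_eqF //; lra.
have hl0 : 0 < lam by rewrite hl; apply: divr_gt0 => //; exact: exprn_gt0.
have hlm : 1 + lam * mu != 0.
  have : 0 < lam * mu by apply: mulr_gt0.
  move=> h; rewrite gt_eqF //; lra.
rewrite hx' hxt; coord.
rewrite hl in hlm *.
field.
have ha2 : 0 <= a ^+ 2 * mu by apply: mulr_ge0 => //; [exact: sqr_ge0 | lra].
rewrite hAa hc (gt_eqF hD) (gt_eqF ha) /= andbT; rewrite gt_eqF //; lra.
Qed.

Lemma ipDr (R : realType) n (p q r : 'rV[R]_n) (s t : R) :
  ip r (s *: p + t *: q) = s * ip r p + t * ip r q.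
Proof. coord; ring. Qed.

Lemma a_facts (R : realType) (mu A lam a : R) : 0 < mu -> 0 <= A -> 0 < lam ->
  a = ((1 + 2 * mu * A) * lam + Num.sqrt ((1 + 2 * mu * A) ^+ 2 * lam ^+ 2
         + 4 * (1 + mu * A) * A * lam)) / 2 ->
  [/\ 0 < a, lam = a ^+ 2 / (a * (1 + 2 * mu * A) + (1 + mu * A) * A) & mu * A * lam <= a].
Proof.
move=> hmu hA hl ha.
have hmA : 0 <= mu * A by apply: mulr_ge0; lra.
set b := 1 + 2 * mu * A in ha *.
have hb : 1 <= b by rewrite /b -mulrA; lra.
set Q := b ^+ 2 * lam ^+ 2 + 4 * (1 + mu * A) * A * lam in ha.
have hQ : 0 <= Q.
  rewrite /Q; apply: addr_ge0; first by apply: mulr_ge0; exact: sqr_ge0.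
  apply: mulr_ge0; last lra. apply: mulr_ge0; last lra. apply: mulr_ge0; lra.
have hS := sqr_sqrtr hQ.
have hS0 : 0 <= Num.sqrt Q := sqrtr_ge0 Q.
have hbl : 0 < b * lam by apply: mulr_gt0; lra.
have ha0 : 0 < a by rewrite ha; lra.
have hrel : a ^+ 2 = lam * (a * b + (1 + mu * A) * A).
  have e : Num.sqrt Q = 2 * a - b * lam by rewrite ha; lra.
  rewrite e /Q in hS; nra.
have hD : 0 < a * b + (1 + mu * A) * A.
  have : 0 <= (1 + mu * A) * A by apply: mulr_ge0; lra.
  have : 0 < a * b by apply: mulr_gt0; lra.
  lra.
split => //.
  by rewrite hrel mulfK // gt_eqF.
have h1 : 0 <= a * (a - lam * b).
  have : 0 <= lam * ((1 + mu * A) * A) by apply: mulr_ge0; [lra | apply: mulr_ge0; lra].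
  nra.
rewrite pmulr_rge0 // in h1.
have : mu * A * lam <= b * lam by rewrite ler_pM2r // /b -mulrA; lra.
nra.
Qed.

Lemma step_ineq (R : realType) n (x y y' v w xt x' : 'rV[R]_n) (A a mu lam eps : R) :
  0 <= A -> 0 < mu -> 0 < lam ->
  a = ((1 + 2 * mu * A) * lam + Num.sqrt ((1 + 2 * mu * A) ^+ 2 * lam ^+ 2
         + 4 * (1 + mu * A) * A * lam)) / 2 ->
  xt = ((a - mu * A * lam) / (A + a)) *: x + ((A + mu * A * lam) / (A + a)) *: y ->
  x' = ((1 + mu * A) / (1 + mu * (A + a))) *: x + ((mu * a) / (1 + mu * (A + a))) *: y'
              - (a / (1 + mu * (A + a))) *: v ->
  ip (lam *: v + y' - xt) (lam *: v + y' - xt) / (1 + lam * mu) + 2 * lam * eps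
     <= ip (y' - xt) (y' - xt) ->
  (A + a) * eps <=
  (1 + mu * A) / 2 * ip (w - x) (w - x) - (1 + mu * (A + a)) / 2 * ip (w - x') (w - x')
  + (a * ip v (w - y') + A * ip v (y - y')) + mu / 2 * (a * ip (w - y') (w - y') + A * ip (y - y') (y - y')).
Proof.
move=> hA hmu hl ha hxt hx' hcr.
have [ha0 hl' hma] := @a_facts R mu A lam a hmu hA hl ha.
rewrite -ipDr (@step_id R n x y y' v w xt x' A a mu lam hA ha0 hmu hl' hxt hx').
have hlm : 0 < 1 + lam * mu by have := mulr_gt0 hl hmu; lra.
set Np := ip (lam *: v + y' - xt) _ in hcr *.
set Nr := ip (y' - xt) _ in hcr *.
have hX : 2 * lam * (1 + lam * mu) * eps <= (1 + lam * mu) * Nr - Np.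
  have e : Np / (1 + lam * mu) * (1 + lam * mu) = Np by rewrite divfK // gt_eqF.
  have := ler_wpM2r (ltW hlm) hcr.
  rewrite mulrDl e; lra.
have hK : 0 <= (A + a) / (1 + lam * mu) / (2 * lam).
  apply: divr_ge0; [apply: divr_ge0; lra | lra].
have h1 := ler_wpM2l hK hX.
have e2 : (A + a) / (1 + lam * mu) / (2 * lam) * (2 * lam * (1 + lam * mu) * eps) = (A + a) * eps.
  by field; rewrite !gt_eqF //; lra.
rewrite e2 in h1.
have hAa : 0 < A + a by lra.
have h2 : 0 <= (A + a) / (1 + lam * mu) * mu / 2 * ((a - mu * A * lam) / (A + a)) *
    ((A + mu * A * lam) / (A + a)) * ip (x - y) (x - y).
  apply: mulr_ge0; last exact: nsq_ge0.
  apply: mulr_ge0; last first.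
    apply: divr_ge0; last lra.
    have : 0 <= mu * A * lam by apply: mulr_ge0; [apply: mulr_ge0|]; lra.
    lra.
  apply: mulr_ge0; last by apply: divr_ge0; lra.
  apply: divr_ge0; last lra.
  apply: mulr_ge0; last lra.
  apply: divr_ge0; lra.
lra.
Qed.

Lemma sum_fin (R : realType) (e1 e2 : \bar R) : e1 <> -oo%E -> e2 <> -oo%E -> (e1 + e2 < +oo)%E ->
  e1 = (fine e1)%:E /\ e2 = (fine e2)%:E.
Proof. by case: e1 => [r||]; case: e2 => [r'||]. Qed.
Arguments sum_fin {R e1 e2}.
Arguments nsq_ge0 {R n}.
Arguments cs {R n}.
Arguments subdiff_fin {R n f e y u}.

Theorem theorem2p6 (R : realType) (n : nat) (f g : 'rV[R]_n -> \bar R) (mu : R)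
  (xstar : 'rV[R]_n) (sigma : R)
  (x y xt v : nat -> 'rV[R]_n) (eps lam a A : nat -> R) :
  proper_fun f -> closed_fun f -> convex_fun f ->
  proper_fun g -> closed_fun g -> 0 < mu -> strongly_convex mu g ->
  (exists z, (f z + g z < +oo)%E) ->
  (forall z, (f xstar + g xstar <= f z + g z)%E) ->
  algorithm1 f g mu sigma x y xt v eps lam a A ->
  let h := fun z => (f z + g z)%E in
  let d0 := enorm (xstar - x 0%N) in
  (forall k : nat, (1 <= k)%N ->
     [/\ (h (y k) - h xstar <= (d0 ^+ 2 / (2 * A k))%:E)%E,
         enorm (xstar - y k) ^+ 2 <= d0 ^+ 2 / (mu * A k) &
         enorm (xstar - x k) ^+ 2 <= d0 ^+ 2 / (1 + mu * A k)]) /\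
  (forall k : nat, (1 <= k)%N ->
     [/\ in_sum_subdiff f g (eps k.+1) (y k.+1) (v k.+1),
         enorm (v k.+1) ^+ 2 <=
           6 * (1 + sigma * Num.sqrt (1 + mu * lam k.+1)) ^+ 2 / lam k.+1 ^+ 2
             * (d0 ^+ 2 / (mu * A k)) &
         eps k.+1 <= 3 * sigma ^+ 2 / lam k.+1 * (d0 ^+ 2 / (mu * A k))]).
Proof.
move=> hfp hfc hfcv hgp hgc hmu hgsc [z hz] hmin [hsig [hA0 halg]] h d0.
have hfn := hfp.1; have hgn := hgp.1.
have [hfz hgz] := sum_fin (hfn z) (hgn z) hz.
have hxs : (f xstar + g xstar < +oo)%E := le_lt_trans (hmin z) hz.
have [hfs hgs] := sum_fin (hfn xstar) (hgn xstar) hxs.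
have hfz' : exists z, (f z < +oo)%E by exists z; rewrite hfz ltry.
have hgz' : exists z, (g z < +oo)%E by exists z; rewrite hgz ltry.
have hAge : forall k, 0 <= A k.
  elim => [|k IH]; first by rewrite hA0.
  case: (halg k) => [[hl ha] _ _ hAk _].
  have [ha0 _ _] := @a_facts R mu (A k) (lam k.+1) (a k.+1) hmu IH hl ha.
  rewrite hAk; lra.
have hApos : forall k, 0 < A k.+1.
  move=> k; case: (halg k) => [[hl ha] _ _ hAk _].
  have [ha0 _ _] := @a_facts R mu (A k) (lam k.+1) (a k.+1) hmu (hAge k) hl ha.
  have := hAge k; rewrite hAk; lra.
have hAmono : forall k, A k <= A k.+1.
  move=> k; case: (halg k) => [[hl ha] _ _ hAk _].
  have [ha0 _ _] := @a_facts R mu (A k) (lam k.+1) (a k.+1) hmu (hAge k) hl ha.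
  rewrite hAk; lra.
have hfy : forall k, f (y k.+1) = (fine (f (y k.+1)))%:E.
  move=> k; case: (halg k) => [_ _ [[uf [w [hsf [hsg _]]]] _ _] _ _].
  exact: subdiff_fin hfn hfz' hsf.
have hgy : forall k, g (y k.+1) = (fine (g (y k.+1)))%:E.
  move=> k; case: (halg k) => [_ _ [[uf [w [hsf [hsg _]]]] _ _] _ _].
  exact: subdiff_fin hgn hgz' hsg.
pose fs := fine (f xstar); pose gs := fine (g xstar).
pose F k := fine (f (y k)) + fine (g (y k)).
pose N0 := ip (xstar - x 0%N) (xstar - x 0%N).
have G2all : forall k, A k * (F k.+1 + ip (v k.+1) (y k - y k.+1)
     + mu / 2 * ip (y k - y k.+1) (y k - y k.+1) - eps k.+1) <= A k * F k.
  case => [|k]; first by rewrite hA0 !mul0r.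
  case: (halg k.+1) => [_ _ [hsd _ _] _ _].
  apply: ler_wpM2l; first exact: hAge.
  exact: (@gamma R n f g mu (eps k.+2) (y k.+2) (v k.+2) (y k.+1) _ _ _ _ hmu hgsc hsd
            (hfy k.+1) (hgy k.+1) (hfy k) (hgy k)).
have lyap : forall k, A k * F k + (1 + mu * A k) / 2 * ip (xstar - x k) (xstar - x k)
                     <= A k * (fs + gs) + 1 / 2 * N0.
  elim => [|k IH]; first by rewrite hA0 /N0; lra.
  case: (halg k) => [[hl ha] hxt [hsd heps hcr] hAk hxk].
  rewrite hAk in hxk.
  have hcr' : ip (lam k.+1 *: v k.+1 + y k.+1 - xt k) (lam k.+1 *: v k.+1 + y k.+1 - xt k)
       / (1 + lam k.+1 * mu) + 2 * lam k.+1 * eps k.+1 <= ip (y k.+1 - xt k) (y k.+1 - xt k).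
    rewrite -!enorm_sq; apply: le_trans hcr _.
    have := sqr_ge0 (enorm (y k.+1 - xt k)); case/andP: hsig => hs0 hs1.
    have : sigma ^+ 2 <= 1 by nra.
    nra.
  have hst := @step_ineq R n (x k) (y k) (y k.+1) (v k.+1) xstar (xt k) (x k.+1) (A k) (a k.+1)
     mu (lam k.+1) (eps k.+1) (hAge k) hmu hl ha hxt hxk hcr'.
  have G1 := @gamma R n f g mu (eps k.+1) (y k.+1) (v k.+1) xstar _ _ _ _ hmu hgsc hsd
            (hfy k) (hgy k) hfs hgs.
  have [ha0 _ _] := @a_facts R mu (A k) (lam k.+1) (a k.+1) hmu (hAge k) hl ha.
  have G1a := ler_wpM2l (ltW ha0) G1.
  have G2 := G2all k.
  rewrite hAk; rewrite /F in IH G2 *; rewrite /fs /gs in G1a IH *.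
  lra.
have hd0 : d0 ^+ 2 = N0 by rewrite /d0 enorm_sq.
have hN0 : 0 <= N0 by exact: nsq_ge0.
have partA : forall k, [/\ F k.+1 - (fs + gs) <= d0 ^+ 2 / (2 * A k.+1),
         ip (xstar - y k.+1) (xstar - y k.+1) <= d0 ^+ 2 / (mu * A k.+1) &
         ip (xstar - x k.+1) (xstar - x k.+1) <= d0 ^+ 2 / (1 + mu * A k.+1)].
  move=> k.
  have L := lyap k.+1.
  have hA := hApos k.
  have hlow := @hmin_lemma R n f g mu (y k.+1) xstar _ _ _ _ hmu hfcv hgsc hfn hgn hmin
      (hfy k) (hgy k) hfs hgs.
  rewrite nsqN in hlow.
  have hlowA := ler_wpM2l (ltW hA) hlow.
  have hNx := nsq_ge0 (xstar - x k.+1).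
  have hNy := nsq_ge0 (xstar - y k.+1).
  have hmAN : 0 <= mu * A k.+1 * ip (xstar - x k.+1) (xstar - x k.+1).
    by apply: mulr_ge0 => //; apply: mulr_ge0; lra.
  have hmAy : 0 <= mu * A k.+1 * ip (xstar - y k.+1) (xstar - y k.+1).
    by apply: mulr_ge0 => //; apply: mulr_ge0; lra.
  rewrite hd0; rewrite /F /fs /gs in L hlow hlowA *.
  split.
  - rewrite ler_pdivlMr; last lra. lra.
  - rewrite ler_pdivlMr; last by apply: mulr_gt0. lra.
  - rewrite ler_pdivlMr; last by have := mulr_gt0 hmu hA; lra. lra.
split.
  case => [//|k] _; have [p1 p2 p3] := partA k.
  rewrite hd0 in p1 p2 p3.
  split; rewrite ?enorm_sq; [|exact: p2|exact: p3].
  rewrite /h (hfy k) (hgy k) hfs hgs -?EFinD -?EFinB lee_fin; exact: p1.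
case => [//|k] _.
case: (halg k.+1) => [[hl ha] hxt [hsd heps hcr] hAk hxk].
have [_ p2 p3] := partA k.
have [_ p2' _] := partA k.+1.
have hA := hApos k.
have hA2 := hAmono k.+1.
set B := d0 ^+ 2 / (mu * A k.+1).
have hB0 : 0 <= B by rewrite /B; apply: divr_ge0; [exact: sqr_ge0 | apply: mulr_ge0; lra].
have hmA : 0 < mu * A k.+1 by apply: mulr_gt0.
have hy2 : ip (xstar - y k.+2) (xstar - y k.+2) <= B.
  apply: le_trans p2' _; rewrite /B; apply: ler_wpM2l; first exact: sqr_ge0.
  rewrite lef_pV2 ?posrE; [|apply: mulr_gt0; lra|exact: hmA].
  by apply: ler_wpM2l; lra.
have hx1 : ip (xstar - x k.+1) (xstar - x k.+1) <= B.
  apply: le_trans p3 _; rewrite /B; apply: ler_wpM2l; first exact: sqr_ge0.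
  rewrite lef_pV2 ?posrE; [lra|lra|exact: hmA].
have [ha0 hl' hma] := @a_facts R mu (A k.+1) (lam k.+2) (a k.+2) hmu (hAge _) hl ha.
have hAa : 0 < A k.+1 + a k.+2 by lra.
have hxt2 : ip (xstar - xt k.+1) (xstar - xt k.+1) =
   ip (((a k.+2 - mu * A k.+1 * lam k.+2) / (A k.+1 + a k.+2)) *: (xstar - x k.+1)
       + ((A k.+1 + mu * A k.+1 * lam k.+2) / (A k.+1 + a k.+2)) *: (xstar - y k.+1))
      (((a k.+2 - mu * A k.+1 * lam k.+2) / (A k.+1 + a k.+2)) *: (xstar - x k.+1)
       + ((A k.+1 + mu * A k.+1 * lam k.+2) / (A k.+1 + a k.+2)) *: (xstar - y k.+1)).
  by rewrite hxt; coord; field; rewrite gt_eqF.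
have hal : 0 <= (a k.+2 - mu * A k.+1 * lam k.+2) / (A k.+1 + a k.+2).
  by apply: divr_ge0; lra.
have hbe : 0 <= (A k.+1 + mu * A k.+1 * lam k.+2) / (A k.+1 + a k.+2).
  apply: divr_ge0; last lra.
  have : 0 <= mu * A k.+1 * lam k.+2 by apply: mulr_ge0; [apply: mulr_ge0|]; lra.
  lra.
have hsum : (a k.+2 - mu * A k.+1 * lam k.+2) / (A k.+1 + a k.+2)
            + (A k.+1 + mu * A k.+1 * lam k.+2) / (A k.+1 + a k.+2) = 1.
  by field; rewrite gt_eqF.
have hconv := @nsq_conv R n (xstar - x k.+1) (xstar - y k.+1) _ _ hal hbe hsum.
rewrite -hxt2 in hconv.
have hxtB : ip (xstar - xt k.+1) (xstar - xt k.+1) <= B.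
  apply: le_trans hconv _.
  have h1 := ler_wpM2l hal hx1.
  have h2 := ler_wpM2l hbe p2.
  have e : (a k.+2 - mu * A k.+1 * lam k.+2) / (A k.+1 + a k.+2) * B
           + (A k.+1 + mu * A k.+1 * lam k.+2) / (A k.+1 + a k.+2) * B = B.
    by rewrite -mulrDl hsum mul1r.
  rewrite /B in e h1 h2 *; lra.
have hr : ip (y k.+2 - xt k.+1) (y k.+2 - xt k.+1) <= 4 * B.
  have -> : y k.+2 - xt k.+1 = (y k.+2 - xstar) + (xstar - xt k.+1) by rewrite addrA subrK.
  apply: le_trans (@nsq_add2 R n _ _) _; rewrite nsqN; lra.
rewrite !enorm_sq in hcr.
set Np := ip (lam k.+2 *: v k.+2 + y k.+2 - xt k.+1) _ in hcr.
set Nr := ip (y k.+2 - xt k.+1) _ in hcr hr.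
have hlm : 0 < 1 + lam k.+2 * mu by have := mulr_gt0 hl hmu; lra.
have hNp0 : 0 <= Np by exact: nsq_ge0.
have hNr0 : 0 <= Nr by exact: nsq_ge0.
have hNpd : 0 <= Np / (1 + lam k.+2 * mu) by apply: divr_ge0; lra.
have hs2 : 0 <= sigma ^+ 2 by exact: sqr_ge0.
have hsB : 0 <= sigma ^+ 2 * B by exact: mulr_ge0.
have hsr := ler_wpM2l hs2 hr.
have hle : 0 <= 2 * lam k.+2 * eps k.+2 by apply: mulr_ge0 => //; lra.
split => //.
  rewrite enorm_sq.
  set s := sigma * Num.sqrt (1 + mu * lam k.+2).
  have hsq : s ^+ 2 = sigma ^+ 2 * (1 + lam k.+2 * mu).
    rewrite /s exprMn sqr_sqrtr ?(mulrC mu) //; lra.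
  have hs0 : 0 <= s by rewrite /s; apply: mulr_ge0; [case/andP: hsig | exact: sqrtr_ge0].
  have hNp : Np <= s ^+ 2 * Nr.
    rewrite hsq -mulrA (mulrC _ Nr) mulrA -ler_pdivrMr //; lra.
  have hcs := cs (lam k.+2 *: v k.+2 + y k.+2 - xt k.+1) (y k.+2 - xt k.+1).
  rewrite -/Np -/Nr in hcs.
  have hlv : ip (lam k.+2 *: v k.+2) (lam k.+2 *: v k.+2) =
     Np - 2 * ip (lam k.+2 *: v k.+2 + y k.+2 - xt k.+1) (y k.+2 - xt k.+1) + Nr.
    by rewrite /Np /Nr; coord; ring.
  rewrite nsqZ in hlv.
  set I := ip (lam k.+2 *: v k.+2 + y k.+2 - xt k.+1) (y k.+2 - xt k.+1) in hcs hlv.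
  set t := s * Nr.
  have ht0 : 0 <= t by exact: mulr_ge0.
  have hq : I ^+ 2 <= t ^+ 2.
    apply: le_trans hcs _; rewrite /t exprMn expr2 mulrA.
    by apply: ler_wpM2r.
  have hI : - I <= t by nra.
  have h1s : 0 <= (1 + s) ^+ 2 * B by apply: mulr_ge0; [exact: sqr_ge0|].
  have h4 := ler_wpM2l (sqr_ge0 (1 + s)) hr.
  have hl2 : 0 < lam k.+2 ^+ 2 by exact: exprn_gt0.
  rewrite mulrAC ler_pdivlMr //.
  rewrite /t in hI; nra.
rewrite mulrAC ler_pdivlMr //.
lra.
Qed.
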